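(* Let $\Omega\subset\mathbb{R}^N$ be a bounded open connected set, $F:\Omega\times\mathbb{R}\times\mathcal{S}(N)\to\mathbb{R}$ continuous with $\{(r,A):F(x,r,A)=0\}\neq\emptyset$ for each $x$, and $\Phi$ a proper elliptic map on $\Omega$ such that $F(x,r+s,A+P)\ge F(x,r,A)$ for all $x\in\Omega$, $(r,A)\in\Phi(x)$, $(s,P)\in\mathcal{Q}$. Let $\Theta(x):=\{(r,A)\in\Phi(x):F(x,r,A)\ge0\}$ and suppose $\Theta$ is a proper elliptic map. Then: (a) $u\in\mathrm{USC}(\Omega)$ is a $\Phi$-admissible viscosity subsolution of $F(x,u,D^2u)=0$ in $\Omega$ if and only if $u$ is $\Theta$-subharmonic in $\Omega$. (b) Provided that $F(x,r,A)>0$ for each $x\in\Omega$ and each $(r,A)\in(\Theta(x))^\circ$, a function $u\in\mathrm{LSC}(\Omega)$ is a $\Phi$-admissible viscosity supersolution of $F(x,u,D^2u)=0$ in $\Omega$ if and only if $u$ is $\Theta$-superharmonic in $\Omega$ (equivalently, $-u$ is $\tilde\Theta$-subharmonic in $\Omega$).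
   Context: $\mathcal{S}(N)$: real symmetric $N\times N$ matrices. $\mathcal{Q}:=\{(s,P): s\le0,\ P\ge0\}$. A proper elliptic map assigns to each $x\in\Omega$ a closed, nonempty set $\subsetneq\mathbb{R}\times\mathcal{S}(N)$ invariant under adding $\mathcal Q$. Dual map: $\tilde\Theta(x):=-\big[(\mathbb{R}\times\mathcal{S}(N))\setminus(\Theta(x))^\circ\big]$. $J^+_{x_0}u:=\{(\varphi(x_0),D^2\varphi(x_0)):\varphi$ is $C^2$ near $x_0$, $u\le\varphi$ near $x_0$, $u(x_0)=\varphi(x_0)\}$, $J^-_{x_0}u$ likewise with $u\ge\varphi$. $u\in\mathrm{USC}(\Omega)$ is $\Theta$-subharmonic if $J^+_{x_0}u\subset\Theta(x_0)$ for all $x_0$; $u\in\mathrm{LSC}(\Omega)$ is $\Theta$-superharmonic if $J^-_{x_0}u\subset(\mathbb{R}\times\mathcal{S}(N))\setminus(\Theta(x_0))^\circ$ for all $x_0$. $u\in\mathrm{USC}(\Omega)$ is a $\Phi$-admissible viscosity subsolution if for every $x_0\in\Omega$ and $(r,A)\in J^+_{x_0}u$: $F(x_0,r,A)\ge0$ and $(r,A)\in\Phi(x_0)$. $u\in\mathrm{LSC}(\Omega)$ is a $\Phi$-admissible viscosity supersolution if for every $x_0$ and $(r,A)\in J^-_{x_0}u$: $F(x_0,r,A)\le0$ or $(r,A)\notin(\Phi(x_0))^\circ$. *)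

(* Defs.v *)
From HB Require Import structures.
From mathcomp Require Import all_boot all_order all_algebra.
From mathcomp Require Import all_classical all_reals all_analysis.
Import Order.TTheory GRing.Theory Num.Theory.
Import numFieldNormedType.Exports.

Set Implicit Arguments.
Unset Strict Implicit.
Unset Printing Implicit Defensive.

Local Open Scope ring_scope.
Local Open Scope classical_set_scope.

Section ViscosityDefs.
Context {R : realType} {N : nat}.

Definition symmetric_mx (A : 'M[R]_N) : Prop := A^T = A.

Definition psd (P : 'M[R]_N) : Prop :=
  symmetric_mx P /\ forall v : 'rV[R]_N, 0 <= (v *m P *m v^T) 0 0.

Definition RxS : set (R * 'M[R]_N) := [set p | symmetric_mx p.2].

Definition jet_close (p q : R * 'M[R]_N) (e : R) : Prop :=
  `|p.1 - q.1| < e /\ forall i j, `|p.2 i j - q.2 i j| < e.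

Definition jet_interior (S : set (R * 'M[R]_N)) : set (R * 'M[R]_N) :=
  [set p | symmetric_mx p.2 /\
     exists2 e : R, 0 < e & forall q, symmetric_mx q.2 -> jet_close p q e -> S q].

Definition jet_closed (S : set (R * 'M[R]_N)) : Prop :=
  forall p, symmetric_mx p.2 ->
    (forall e : R, 0 < e -> exists q, S q /\ jet_close p q e) -> S p.

Definition proper_elliptic (Omega : set 'rV[R]_N)
    (Theta : 'rV[R]_N -> set (R * 'M[R]_N)) : Prop :=
  forall x, Omega x ->
    [/\ Theta x `<=` RxS,
        jet_closed (Theta x),
        exists p, Theta x p,
        exists p, RxS p /\ ~ Theta x p
      & forall r A s P, Theta x (r, A) -> s <= 0 -> psd P ->
          Theta x (r + s, A + P)].

Definition dual_map (Theta : 'rV[R]_N -> set (R * 'M[R]_N)) :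
    'rV[R]_N -> set (R * 'M[R]_N) :=
  fun x => [set p | RxS (- p.1, - p.2) /\ ~ jet_interior (Theta x) (- p.1, - p.2)].

Definition unitv (i : 'I_N) : 'rV[R]_N := delta_mx 0 i.

Definition partial (i : 'I_N) (f : 'rV[R]_N -> R) : 'rV[R]_N -> R :=
  fun x => derive f x (unitv i).

Definition C2_near (phi : 'rV[R]_N -> R) (x0 : 'rV[R]_N) : Prop :=
  exists U : set 'rV[R]_N, [/\ open U, U x0 &
    forall x, U x ->
      [/\ {for x, continuous phi},
          forall i, derivable phi x (unitv i),
          forall i, {for x, continuous (partial i phi)},
          forall i j, derivable (partial i phi) x (unitv j)
        & forall i j, {for x, continuous (partial j (partial i phi))}]].

Definition hessian (phi : 'rV[R]_N -> R) (x : 'rV[R]_N) : 'M[R]_N :=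
  \matrix_(i, j) partial i (partial j phi) x.

Definition usc_on (Omega : set 'rV[R]_N) (u : 'rV[R]_N -> \bar R) : Prop :=
  forall x, Omega x ->
    (u x != +oo)%E /\
    forall c : R, (u x < c%:E)%E -> \forall y \near x, (u y < c%:E)%E.

Definition lsc_on (Omega : set 'rV[R]_N) (u : 'rV[R]_N -> \bar R) : Prop :=
  forall x, Omega x ->
    (u x != -oo)%E /\
    forall c : R, (c%:E < u x)%E -> \forall y \near x, (c%:E < u y)%E.

Definition jet_plus (u : 'rV[R]_N -> \bar R) (x0 : 'rV[R]_N) : set (R * 'M[R]_N) :=
  [set p | exists phi, [/\ C2_near phi x0,
      (\forall y \near x0, (u y <= (phi y)%:E)%E),
      u x0 = (phi x0)%:E
    & p = (phi x0, hessian phi x0)]].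

Definition jet_minus (u : 'rV[R]_N -> \bar R) (x0 : 'rV[R]_N) : set (R * 'M[R]_N) :=
  [set p | exists phi, [/\ C2_near phi x0,
      (\forall y \near x0, ((phi y)%:E <= u y)%E),
      u x0 = (phi x0)%:E
    & p = (phi x0, hessian phi x0)]].

Definition subharmonic (Omega : set 'rV[R]_N) (Theta : 'rV[R]_N -> set (R * 'M[R]_N))
    (u : 'rV[R]_N -> \bar R) : Prop :=
  forall x0, Omega x0 -> jet_plus u x0 `<=` Theta x0.

Definition superharmonic (Omega : set 'rV[R]_N) (Theta : 'rV[R]_N -> set (R * 'M[R]_N))
    (u : 'rV[R]_N -> \bar R) : Prop :=
  forall x0, Omega x0 ->
    jet_minus u x0 `<=` [set p | RxS p /\ ~ jet_interior (Theta x0) p].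

Definition adm_subsolution (Omega : set 'rV[R]_N) (F : 'rV[R]_N -> R -> 'M[R]_N -> R)
    (Phi : 'rV[R]_N -> set (R * 'M[R]_N)) (u : 'rV[R]_N -> \bar R) : Prop :=
  forall x0, Omega x0 -> forall r A, jet_plus u x0 (r, A) ->
    0 <= F x0 r A /\ Phi x0 (r, A).

Definition adm_supersolution (Omega : set 'rV[R]_N) (F : 'rV[R]_N -> R -> 'M[R]_N -> R)
    (Phi : 'rV[R]_N -> set (R * 'M[R]_N)) (u : 'rV[R]_N -> \bar R) : Prop :=
  forall x0, Omega x0 -> forall r A, jet_minus u x0 (r, A) ->
    F x0 r A <= 0 \/ ~ jet_interior (Phi x0) (r, A).

Definition Theta_of (F : 'rV[R]_N -> R -> 'M[R]_N -> R)
    (Phi : 'rV[R]_N -> set (R * 'M[R]_N)) : 'rV[R]_N -> set (R * 'M[R]_N) :=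
  fun x => [set p | Phi x p /\ 0 <= F x p.1 p.2].

Definition F_continuous (Omega : set 'rV[R]_N) (F : 'rV[R]_N -> R -> 'M[R]_N -> R) : Prop :=
  {within [set p : 'rV[R]_N * R * 'M[R]_N | Omega p.1.1 /\ symmetric_mx p.2],
     continuous (fun p : 'rV[R]_N * R * 'M[R]_N => F p.1.1 p.1.2 p.2)}.

End ViscosityDefs.

(* Main.v *)
Require Import Defs.
From HB Require Import structures.
From mathcomp Require Import all_boot all_order all_algebra.
From mathcomp Require Import all_classical all_reals all_analysis.
From mathcomp Require Import ring lra.
Import Order.TTheory GRing.Theory Num.Theory.
Import numFieldNormedType.Exports.
Local Open Scope ring_scope.
Local Open Scope classical_set_scope.

Section Aux.
Context {R : realType} {V : normedModType R}.

Lemma line_is_derive (F : V -> R) (y0 v : V) (s : R) :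
  derivable F (y0 + s *: v) v ->
  is_derive s 1 (fun s => F (y0 + s *: v)) (derive F (y0 + s *: v) v).
Proof.
move=> dF.
have E : (fun h : R => h^-1 *: (((fun s => F (y0 + s *: v)) \o shift s) (h *: 1) - F (y0 + s *: v)))
   = (fun h => h^-1 *: ((F \o shift (y0 + s *: v)) (h *: v) - F (y0 + s *: v))).
  apply: funext => h /=; congr (_ *: (F _ - _)).
  by rewrite [_%:A]mulr1 scalerDl addrCA.
apply: DeriveDef; first by rewrite /derivable E.
by rewrite /derive E.
Qed.

Lemma mvt_line (F : V -> R) (y0 v : V) (a b : R) : a < b ->
  (forall s, a <= s <= b -> derivable F (y0 + s *: v) v) ->
  exists2 c, a < c < b &
    F (y0 + b *: v) - F (y0 + a *: v) = derive F (y0 + c *: v) v * (b - a).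
Proof.
move=> ab dF.
have dF' : forall x, x \in `]a, b[%R -> is_derive x 1 (fun s => F (y0 + s *: v)) (derive F (y0 + x *: v) v).
  move=> x; rewrite in_itv /= => /andP[ax xb].
  by apply: line_is_derive; apply: dF; rewrite !ltW.
have cont : {within `[a, b], continuous (fun s => F (y0 + s *: v))}.
  apply: derivable_within_continuous => x; rewrite in_itv /= => xab.
  by case: (line_is_derive F y0 v x (dF x xab)).
have [c cab ->] := MVT ab dF' cont.
by exists c => //; move: cab; rewrite in_itv.
Qed.

Lemma mvt_line2 (F : V -> R) (y1 y2 v : V) (a b : R) : a < b ->
  (forall s, a <= s <= b -> derivable F (y1 + s *: v) v /\ derivable F (y2 + s *: v) v) ->
  exists2 c, a < c < b &
    (F (y1 + b *: v) - F (y2 + b *: v)) - (F (y1 + a *: v) - F (y2 + a *: v))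
    = (derive F (y1 + c *: v) v - derive F (y2 + c *: v) v) * (b - a).
Proof.
move=> ab dF.
pose f1 := fun s => F (y1 + s *: v).
pose f2 := fun s => F (y2 + s *: v).
have dF' : forall x, x \in `]a, b[%R -> is_derive x 1 (f1 - f2)
   (derive F (y1 + x *: v) v - derive F (y2 + x *: v) v).
  move=> x; rewrite in_itv /= => /andP[ax xb].
  have [d1 d2] : derivable F (y1 + x *: v) v /\ derivable F (y2 + x *: v) v.
    by apply: dF; rewrite !ltW.
  exact: is_deriveB (line_is_derive F y1 v x d1) (line_is_derive F y2 v x d2).
have cont : {within `[a, b], continuous (f1 - f2)}.
  apply: derivable_within_continuous => x; rewrite in_itv /= => xab.
  have [d1 d2] := dF x xab.
  apply: derivableB.
    by case: (line_is_derive F y1 v x d1).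
  by case: (line_is_derive F y2 v x d2).
have [c cab E] := MVT ab dF' cont.
by exists c; [move: cab; rewrite in_itv | exact: E].
Qed.

Lemma nb_line (x e d : V) (t dl s u : R) : t * (`|e| + `|d|) < dl ->
  0 <= s <= t -> 0 <= u <= t -> `|x - (x + s *: e + u *: d)| < dl.
Proof.
move=> tdl /andP[s0 st] /andP[u0 ut].
have -> : x - (x + s *: e + u *: d) = - (s *: e + u *: d).
  by rewrite -addrA opprD addrA subrr add0r.
rewrite normrN; apply: le_lt_trans (ler_normD _ _) _.
rewrite !normrZ (ger0_norm s0) (ger0_norm u0); apply: le_lt_trans tdl.
by rewrite mulrDr lerD // ler_wpM2r.
Qed.

Lemma schwarz_aux (f : V -> R) (x e d : V) (dl t : R) : 0 < t ->
  t * (`|e| + `|d|) < dl ->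
  (forall y, `|x - y| < dl -> derivable f y e /\ derivable (fun z => derive f z e) y d) ->
  exists2 y, `|x - y| < dl &
    f (x + t *: e + t *: d) - f (x + t *: e) - f (x + t *: d) + f x
    = t ^+ 2 * derive (fun z => derive f z e) y d.
Proof.
move=> t0 tdl hd.
have t01 : 0 <= t <= t by rewrite lexx ltW.
have hd' : forall s u, 0 <= s <= t -> 0 <= u <= t ->
    derivable f (x + s *: e + u *: d) e /\ derivable (fun z => derive f z e) (x + s *: e + u *: d) d.
  by move=> s u sb ub; apply: hd; exact: (nb_line x e d t dl s u tdl sb ub).
have [s /andP[s0 st] E1] : exists2 s, 0 < s < t &
    (f (x + t *: d + t *: e) - f (x + t *: e)) - (f (x + t *: d + 0 *: e) - f (x + 0 *: e))
    = (derive f (x + t *: d + s *: e) e - derive f (x + s *: e) e) * (t - 0).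
  apply: (mvt_line2 f (x + t *: d) x e 0 t t0) => s sb; split.
    by rewrite addrAC; case: (hd' s t sb t01).
  have -> : x + s *: e = x + s *: e + 0 *: d by rewrite scale0r addr0.
  by case: (hd' s 0 sb); rewrite ?lexx ?ltW.
have s01 : 0 <= s <= t by rewrite !ltW.
have [u /andP[u0 ut] E2] : exists2 u, 0 < u < t &
    derive f (x + s *: e + t *: d) e - derive f (x + s *: e + 0 *: d) e
    = derive (fun z => derive f z e) (x + s *: e + u *: d) d * (t - 0).
  apply: (mvt_line (fun z => derive f z e) (x + s *: e) d 0 t t0) => u ub.
  by case: (hd' s u s01 ub).
exists (x + s *: e + u *: d); first by apply: (nb_line x e d t dl s u tdl); rewrite ?ltW.
move: E1 E2; rewrite !scale0r !addr0 !subr0 [x + t *: d + s *: e]addrAC [x + t *: d + t *: e]addrAC => E1 E2.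
rewrite E2 in E1.
rewrite -mulrA -expr2 mulrC in E1; rewrite -E1.
by lra.
Qed.
End Aux.


Section Hess.
Context {R : realType} {N : nat}.

Lemma hessian_sym (phi : 'rV[R]_N -> R) x0 : C2_near phi x0 -> symmetric_mx (hessian phi x0).
Proof.
case=> U [Uo Ux0 HU].
rewrite /symmetric_mx; apply/matrixP => i j; rewrite !mxE.
have [_ _ _ _ H5] := HU x0 Ux0.
set a := partial j (partial i phi) x0.
set b := partial i (partial j phi) x0.
have key : forall eps : R, 0 < eps -> `|a - b| < eps + eps.
  move=> eps eps0.
  have nU : nbhs x0 U by apply: open_nbhs_nbhs; split.
  have c1 : \forall y \near x0, `|a - partial j (partial i phi) y| < eps.
    by move/cvgrPdist_lt: (H5 i j) => /(_ eps eps0).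
  have c2 : \forall y \near x0, `|b - partial i (partial j phi) y| < eps.
    by move/cvgrPdist_lt: (H5 j i) => /(_ eps eps0).
  have : \forall y \near x0, [/\ U y, `|a - partial j (partial i phi) y| < eps
      & `|b - partial i (partial j phi) y| < eps].
    exact: (@filterS3 _ _ _ _ _ _ _ (fun y Uy h1 h2 => And3 Uy h1 h2) nU c1 c2).
  move=> /nbhs_ballP [dl /= dl0 Hb].
  have hb : forall y, `|x0 - y| < dl -> [/\ U y, `|a - partial j (partial i phi) y| < eps
      & `|b - partial i (partial j phi) y| < eps].
    by move=> y yd; apply: Hb; rewrite -ball_normE.
  set c := `|unitv i : 'rV[R]_N| + `|unitv j : 'rV[R]_N| + 1.
  have c0 : 0 < c by rewrite /c ltr_wpDl // addr_ge0.
  set t := dl / c.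
  have t0 : 0 < t by rewrite divr_gt0.
  have tc : forall p q : 'rV[R]_N, `|p| + `|q| < c -> t * (`|p| + `|q|) < dl.
    move=> p q pq; have -> : dl = t * c by rewrite /t divfK ?gt_eqF.
    by rewrite ltr_pM2l.
  have hij : `|unitv i : 'rV[R]_N| + `|unitv j : 'rV[R]_N| < c by rewrite /c ltrDl.
  have hji : `|unitv j : 'rV[R]_N| + `|unitv i : 'rV[R]_N| < c by rewrite addrC.
  have hd : forall k l, forall y, `|x0 - y| < dl ->
      derivable phi y (unitv k) /\ derivable (fun z => derive phi z (unitv k)) y (unitv l).
    move=> k l y yd; have [Uy _ _] := hb y yd.
    by have [_ d1 _ d2 _] := HU y Uy; split; [apply: d1 | apply: d2].
  have [y1 y1d E1] := schwarz_aux phi x0 (unitv i) (unitv j) dl t t0 (tc _ _ hij) (hd i j).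
  have [y2 y2d E2] := schwarz_aux phi x0 (unitv j) (unitv i) dl t t0 (tc _ _ hji) (hd j i).
  have E : partial j (partial i phi) y1 = partial i (partial j phi) y2.
    apply: (@mulfI _ (t ^+ 2)); first by rewrite expf_neq0 // gt_eqF.
    by rewrite -[LHS]E1 -[RHS]E2 [x0 + t *: unitv j + _]addrAC; congr (_ + _); exact: addrAC.
  have [_ h1 _] := hb y1 y1d.
  have [_ _ h2] := hb y2 y2d.
  rewrite -E in h2.
  rewrite (_ : a - b = (a - partial j (partial i phi) y1) - (b - partial j (partial i phi) y1)); last by rewrite opprB addrA subrK.
  have nb := ler_normB (a - partial j (partial i phi) y1) (b - partial j (partial i phi) y1).
  exact: (le_lt_trans nb (ltrD h1 h2)).
apply/eqP; rewrite -subr_eq0 -normr_le0; apply/ler_addgt0Pr => e e0.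
rewrite add0r (splitr e) ltW // key //.
by rewrite divr_gt0 // ltr0n.
Qed.

Lemma cont_near (f g : 'rV[R]_N -> R) (z : 'rV[R]_N) :
  (\forall w \near z, f w = g w) -> {for z, continuous f} -> {for z, continuous g}.
Proof.
move=> e cf; have ez : f z = g z by exact: (nbhs_singleton e).
have H : g @ z --> f z by apply: cvg_trans (near_eq_cvg e) cf.
by rewrite ez in H.
Qed.

Lemma C2_opp (phi : 'rV[R]_N -> R) x0 : C2_near phi x0 ->
  C2_near (fun y => - phi y) x0 /\ hessian (fun y => - phi y) x0 = - hessian phi x0.
Proof.
case=> U [Uo Ux0 HU].
have nearU : forall z, U z -> \forall w \near z, U w.
  by move=> z Uz; apply: open_nbhs_nbhs; split.
have P1 : forall z k, U z -> partial k (fun y => - phi y) z = - partial k phi z.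
  by move=> z k Uz; have [_ d1 _ _ _] := HU z Uz; exact: deriveN (d1 k).
have P1n : forall z k, U z -> \forall w \near z, - partial k phi w = partial k (fun y => - phi y) w.
  by move=> z k Uz; apply: filterS (nearU z Uz) => w Uw; rewrite P1.
have P2 : forall z k l, U z -> partial l (partial k (fun y => - phi y)) z = - partial l (partial k phi) z.
  move=> z k l Uz; have [_ _ _ d2 _] := HU z Uz.
  rewrite /partial -(near_eq_derive _ (P1n z k Uz)).
  exact: deriveN (d2 k l).
have P2n : forall z k l, U z -> \forall w \near z,
    - partial l (partial k phi) w = partial l (partial k (fun y => - phi y)) w.
  by move=> z k l Uz; apply: filterS (nearU z Uz) => w Uw; rewrite P2.
split; last by apply/matrixP => k l; rewrite !mxE; exact: (P2 x0 l k Ux0).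
exists U; split; [exact: Uo | exact: Ux0 | move=> z Uz].
have [c0 d1 c1 d2 c2] := HU z Uz; split.
- exact: cvgN c0.
- by move=> k; apply: derivableN (d1 k).
- by move=> k; apply: cont_near (P1n z k Uz) (cvgN (c1 k)).
- by move=> k l; apply: near_eq_derivable (P1n z k Uz) (derivableN (d2 k l)).
- by move=> k l; apply: cont_near (P2n z k l Uz) (cvgN (c2 k l)).
Qed.

Lemma jet_plus_opp (u : 'rV[R]_N -> \bar R) x0 p :
  jet_plus (fun x => - u x)%E x0 p -> jet_minus u x0 (- p.1, - p.2).
Proof.
case=> phi [C2 nb e ->] /=.
have [C2' H'] := C2_opp phi x0 C2.
exists (fun y => - phi y); split => //.
- apply: filterS nb => y /= h.
  by rewrite EFinN leeNl.
- by rewrite EFinN -e oppeK.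
- by rewrite H'.
Qed.

Lemma jet_minus_opp (u : 'rV[R]_N -> \bar R) x0 p :
  jet_minus u x0 p -> jet_plus (fun x => - u x)%E x0 (- p.1, - p.2).
Proof.
case=> phi [C2 nb e ->] /=.
have [C2' H'] := C2_opp phi x0 C2.
exists (fun y => - phi y); split => //.
- apply: filterS nb => y /= h.
  by rewrite EFinN leeNr oppeK.
- by rewrite EFinN -e.
- by rewrite H'.
Qed.

Lemma int_theta (Omega : set 'rV[R]_N) (F : 'rV[R]_N -> R -> 'M[R]_N -> R)
    (Phi : 'rV[R]_N -> set (R * 'M[R]_N)) x0 r A :
  F_continuous Omega F -> Omega x0 -> jet_interior (Phi x0) (r, A) -> 0 < F x0 r A ->
  jet_interior (Theta_of F Phi x0) (r, A).
Proof.
move=> Fc Ox0 [/= symA [e1 e10 He1]] Fp.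
pose G := fun p : 'rV[R]_N * R * 'M[R]_N => F p.1.1 p.1.2 p.2.
pose S := [set p : 'rV[R]_N * R * 'M[R]_N | Omega p.1.1 /\ symmetric_mx p.2].
pose p0 := (x0, r, A).
have Sp0 : S p0 by split.
have cG : G @ within S (nbhs p0) --> G p0.
  by move/subspace_continuousP: Fc; apply.
have H : \forall t \near within S (nbhs p0), `|G p0 - G t| < G p0.
  by move/cvgrPdist_lt : cG => /(_ _ Fp).
have H2 : nbhs p0 (fun q => S q -> `|G p0 - G q| < G p0) := H.
move/nbhs_ballP: H2 => [e2 /= e20 He2].
split => //; exists (Num.min e1 e2); first by rewrite lt_min e10.
move=> [r' A'] /= symA' [c1 c2].
have c1' : `|r - r'| < e1 by apply: lt_le_trans c1 _; rewrite ge_min lexx.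
have c2' : forall i j, `|A i j - A' i j| < e1.
  by move=> i j; apply: lt_le_trans (c2 i j) _; rewrite ge_min lexx.
split; first by apply: He1 => //; split.
have Hb : ball p0 e2 (x0, r', A').
  have c1e : `|r - r'| < e2 by apply: lt_le_trans c1 _; rewrite ge_min lexx orbT.
  have c2e : forall i j, `|A i j - A' i j| < e2.
    by move=> i j; apply: lt_le_trans (c2 i j) _; rewrite ge_min lexx orbT.
  split; [split|].
  - exact: ballxx.
  - by rewrite -ball_normE.
  - by split => // i j; rewrite -ball_normE; exact: c2e.
have := He2 _ Hb (conj Ox0 symA').
rewrite /G /=.
move: (F x0 r A) (F x0 r' A') => a b h.
have := ler_norm (a - b).
lra.
Qed.
End Hess.

Theorem theorem6p5 (R : realType) (N : nat) (Omega : set 'rV[R]_N)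
    (F : 'rV[R]_N -> R -> 'M[R]_N -> R) (Phi : 'rV[R]_N -> set (R * 'M[R]_N)) :
  open Omega -> bounded_set Omega -> connected Omega ->
  F_continuous Omega F ->
  (forall x, Omega x -> exists (r : R) (A : 'M[R]_N), symmetric_mx A /\ F x r A = 0) ->
  proper_elliptic Omega Phi ->
  (forall x r A s P, Omega x -> Phi x (r, A) -> s <= 0 -> psd P ->
     F x r A <= F x (r + s) (A + P)) ->
  proper_elliptic Omega (Theta_of F Phi) ->
  (forall u : 'rV[R]_N -> \bar R, usc_on Omega u ->
     (adm_subsolution Omega F Phi u <-> subharmonic Omega (Theta_of F Phi) u))
  /\
  ((forall x r A, Omega x -> jet_interior (Theta_of F Phi x) (r, A) -> 0 < F x r A) ->
   forall u : 'rV[R]_N -> \bar R, lsc_on Omega u ->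
     (adm_supersolution Omega F Phi u <-> superharmonic Omega (Theta_of F Phi) u)
     /\ (superharmonic Omega (Theta_of F Phi) u <->
         subharmonic Omega (dual_map (Theta_of F Phi)) (fun x => (- u x)%E))).
Proof.
move=> Oo Ob Oc Fc Fz PhiE Fmono ThE; split.
  move=> u usc; split.
    move=> H x0 Ox0 [r A] jp; have [h1 h2] := H x0 Ox0 r A jp; by split.
  move=> H x0 Ox0 r A jp; have [h1 h2] := H x0 Ox0 (r, A) jp; by split.
move=> Fpos u lsc.
have K2 : forall x0 p, jet_interior (Theta_of F Phi x0) p -> jet_interior (Phi x0) p.
  move=> x0 p [sp [e e0 He]]; split => //; exists e => // q sq cq.
  by case: (He q sq cq).
split; split.
- move=> H x0 Ox0 [r A] jm; split.
    case: jm => phi [C2 _ _ [_ ->]]; exact: hessian_sym C2.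
  move=> iT; have Fp := Fpos x0 r A Ox0 iT.
  case: (H x0 Ox0 r A jm) => [Fle | niP].
    by move: (lt_le_trans Fp Fle); rewrite ltxx.
  by apply: niP; exact: K2.
- move=> H x0 Ox0 r A jm; have [_ niT] := H x0 Ox0 (r, A) jm.
  case: (lerP (F x0 r A) 0) => [Fle | Fgt]; first by left.
  right => iP; apply: niT; exact: int_theta.
- move=> H x0 Ox0 p jp.
  have jm := jet_plus_opp u x0 p jp.
  have [h1 h2] := H x0 Ox0 _ jm; by split.
- move=> H x0 Ox0 [r A] jm.
  have jp := jet_minus_opp u x0 (r, A) jm.
  have [h1 h2] := H x0 Ox0 _ jp.
  move: h1 h2; rewrite /= !opprK => h1 h2; by split.
Qed.
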